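(* Let $\theta_1,\ldots,\theta_N\in[0,1)$ be distinct, $z_q=e^{2\pi i\theta_q}$, let $\mathbf{V}$ be the $N\times N$ Vandermonde matrix with these phases, and let $\lambda_1(N)$ be the smallest eigenvalue of $\mathbf{V}^*\mathbf{V}$. For $p=1,\ldots,N$ let $$T_p(z)=\prod_{q\ne p}\frac{z-z_q}{|z_p-z_q|}.$$ Then $$\frac{1}{N^3\max_p\max_{|z|=1}|T_p(z)|^2}\le\lambda_1(N)\le\frac{1}{\max_p\max_{|z|=1}|T_p(z)|^2}.$$ Moreover, if $p_0$ is an index with $\prod_{q\ne p_0}|z_{p_0}-z_q|\le N$ (such an index always exists), then $$\lambda_1(N)\le\frac{N^2}{\max_{|z|=1}\prod_{q\ne p_0}|z-z_q|^2}\le\frac{4N^2}{\max_{|z|=1}\prod_{q=1}^N|z-z_q|^2}.$$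
   Context: The $N\times N$ Vandermonde matrix has entries $V(j,q)=\frac{1}{\sqrt N}e^{2\pi i (j-1)\theta_q}$, $j,q=1,\ldots,N$. *)

(* Defs.v *)
From Stdlib Require Import Reals Lra List.
Import ListNotations.
Open Scope R_scope.

Definition C := (R * R)%type.
Definition C0 : C := (0, 0).
Definition C1 : C := (1, 0).
Definition RtoC (r : R) : C := (r, 0).
Definition Cadd (a b : C) : C := (fst a + fst b, snd a + snd b).
Definition Copp (a : C) : C := (- fst a, - snd a).
Definition Csub (a b : C) : C := Cadd a (Copp b).
Definition Cmul (a b : C) : C :=
  (fst a * fst b - snd a * snd b, fst a * snd b + snd a * fst b).
Definition Cconj (a : C) : C := (fst a, - snd a).
Definition Cmod (a : C) : R := sqrt (fst a ^ 2 + snd a ^ 2).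

Definition Cexpi (x : R) : C := (cos x, sin x).

Definition Csum (N : nat) (f : nat -> C) : C :=
  fold_right Cadd C0 (map f (seq 0 N)).
Definition Cprod_filter (N : nat) (P : nat -> bool) (f : nat -> C) : C :=
  fold_right Cmul C1 (map f (filter P (seq 0 N))).
Definition Rmax_list (N : nat) (f : nat -> R) : R :=
  fold_right Rmax 0 (map f (seq 0 N)).

Definition zq (theta : nat -> R) (q : nat) : C := Cexpi (2 * PI * theta q).

(* Vandermonde matrix, 0-based: V(j,q) = 1/sqrt N * e^{2 pi i j theta_q},
   j,q = 0..N-1 (corresponding to the paper's (j-1), j = 1..N). *)
Definition Vdm (N : nat) (theta : nat -> R) (j q : nat) : C :=
  Cmul (RtoC (1 / sqrt (INR N))) (Cexpi (2 * PI * INR j * theta q)).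

Definition Gram (N : nat) (theta : nat -> R) (j k : nat) : C :=
  Csum N (fun l => Cmul (Cconj (Vdm N theta l j)) (Vdm N theta l k)).

Definition is_eigenvalue (N : nat) (A : nat -> nat -> C) (lam : C) : Prop :=
  exists x : nat -> C,
    (exists i, (i < N)%nat /\ x i <> C0) /\
    forall j, (j < N)%nat -> Csum N (fun k => Cmul (A j k) (x k)) = Cmul lam (x j).

Definition is_smallest_eigenvalue (N : nat) (A : nat -> nat -> C) (lam1 : R) : Prop :=
  is_eigenvalue N A (RtoC lam1) /\
  forall mu : C, is_eigenvalue N A mu -> snd mu = 0 /\ lam1 <= fst mu.

Definition is_max_circle (f : C -> R) (M : R) : Prop :=
  (exists z, Cmod z = 1 /\ f z = M) /\ (forall z, Cmod z = 1 -> f z <= M).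

Definition Tp (N : nat) (theta : nat -> R) (p : nat) (z : C) : C :=
  Cprod_filter N (fun q => negb (Nat.eqb q p))
    (fun q => Cmul (Csub z (zq theta q)) (RtoC (/ Cmod (Csub (zq theta p) (zq theta q))))).

Definition Pp (N : nat) (theta : nat -> R) (p : nat) (z : C) : C :=
  Cprod_filter N (fun q => negb (Nat.eqb q p)) (fun q => Csub z (zq theta q)).

Definition Pall (N : nat) (theta : nat -> R) (z : C) : C :=
  Cprod_filter N (fun _ => true) (fun q => Csub z (zq theta q)).

Definition gap_prod (N : nat) (theta : nat -> R) (p : nat) : R :=
  fold_right Rmult 1
    (map (fun q => Cmod (Csub (zq theta p) (zq theta q)))
       (filter (fun q => negb (Nat.eqb q p)) (seq 0 N))).

(* Main.v *)
Require Import Defs.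
From Stdlib Require Import Reals Lra Lia List.
From HB Require Import structures.
From mathcomp Require all_boot all_order all_algebra.
From mathcomp Require spectral ring zify.
From mathcomp Require Rstruct complex.
Open Scope R_scope.

Module T.
Import all_boot.
Set Implicit Arguments. Unset Strict Implicit. Unset Printing Implicit Defensive.

Section Trig.
Local Open Scope R_scope.

Lemma cos_lt1 t : 0 < t -> t < 2 * PI -> cos t < 1.
Proof.
move=> h1 h2.
have e : cos t = 1 - 2 * sin (t / 2) * sin (t / 2).
  by rewrite -cos_2a_sin; f_equal; field.
have : 0 < sin (t / 2) by apply: sin_gt_0; lra.
move=> hs; rewrite e; nra.
Qed.

Lemma cs1 x : cos x ^ 2 + sin x ^ 2 = 1.
Proof. have := sin2_cos2 x; rewrite /Rsqr => h; lra. Qed.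

Lemma Cmod_Cexpi x : Cmod (Cexpi x) = 1.
Proof. by rewrite /Cmod /Cexpi /= cs1 sqrt_1. Qed.

Lemma Cexpi_inj a b : 0 <= a < 2 * PI -> 0 <= b < 2 * PI -> Cexpi a = Cexpi b -> a = b.
Proof.
move=> ha hb [hc hs].
have c1 : cos (a - b) = 1.
  by rewrite cos_minus hc hs; have := cs1 b; lra.
case: (Rtotal_order a b) => [ab|[//|ba]].
  have : cos (b - a) < 1 by apply: cos_lt1; lra.
  by rewrite -cos_neg Ropp_minus_distr c1; lra.
have : cos (a - b) < 1 by apply: cos_lt1; lra.
lra.
Qed.

Lemma Cexpi_add x y : Cexpi (x + y) = Cmul (Cexpi x) (Cexpi y).
Proof. by rewrite /Cexpi /Cmul /= cos_plus sin_plus; f_equal; ring. Qed.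

End Trig.

Section TrigB.
Local Open Scope R_scope.
Lemma ang_eq l t : 2 * PI * INR l * t = INR l * (2 * PI * t).
Proof. ring. Qed.
Lemma s2N_R N : (0 < N)%N -> (1 / sqrt (INR N)) * (1 / sqrt (INR N)) * INR N = 1.
Proof.
move=> hN; have hN' : 0 < INR N by exact: (lt_0_INR _ (elimT ssrnat.ltP hN)).
have hs := sqrt_sqrt _ (Rlt_le _ _ hN').
have hs0 : sqrt (INR N) <> 0 by apply: Rgt_not_eq; apply: sqrt_lt_R0.
rewrite -{3}hs; field; exact hs0.
Qed.
Lemma s_pos_R N : (0 < N)%N -> 0 < 1 / sqrt (INR N).
Proof.
move=> hN; have hN' : 0 < INR N by exact: (lt_0_INR _ (elimT ssrnat.ltP hN)).
apply: Rdiv_lt_0_compat; [lra | exact: sqrt_lt_R0].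
Qed.
Lemma om_ang N m : (0 < N)%N -> INR m * (2 * PI / INR N) = 2 * PI * (INR m / INR N).
Proof. move=> hN; have : INR N <> 0 by apply: not_0_INR; apply/eqP; rewrite -lt0n. move=> h; field; exact h. Qed.
Definition Rin01 (x : R) := 0 <= x < 1.
Lemma ang_range t : Rin01 t -> 0 <= 2 * PI * t < 2 * PI.
Proof. rewrite /Rin01 => -[h1 h2]; have := PI_RGT_0 => hp; split; nra. Qed.
Lemma ang_inj t u : 2 * PI * t = 2 * PI * u -> t = u.
Proof. have := PI_RGT_0 => hp h; nra. Qed.
Lemma om_lt1 N m : (0 < m)%N -> (m < N)%N -> cos (2 * PI * (INR m / INR N)) < 1.
Proof.
move=> m0 mN.
have hN' : 0 < INR N by apply: (lt_0_INR _ (elimT ssrnat.ltP (leq_ltn_trans (leq0n m) mN))).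
have hm' : 0 < INR m by exact: (lt_0_INR _ (elimT ssrnat.ltP m0)).
have hmN : INR m < INR N by exact: (lt_INR _ _ (elimT ssrnat.ltP mN)).
have r1 : 0 < INR m / INR N by apply: Rdiv_lt_0_compat.
have r2 : INR m / INR N < 1.
  apply: (Rmult_lt_reg_r (INR N)) => //; rewrite /Rdiv Rmult_assoc Rinv_l; lra.
have := PI_RGT_0 => hp.
apply: cos_lt1; nra.
Qed.
Lemma INR_div_self N : (0 < N)%N -> INR N / INR N = 1.
Proof. move=> hN; apply: Rinv_r; apply: not_0_INR; apply/eqP; rewrite -lt0n //. Qed.
End TrigB.

Section Folds.
Local Open Scope R_scope.

Lemma fold_max_ge (f : nat -> R) l x :
  List.In x l -> f x <= fold_right Rmax 0 (List.map f l).
Proof.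
elim: l => [//|y l IH] /= [->|h]; first exact: Rmax_l.
apply: Rle_trans (IH h) _; exact: Rmax_r.
Qed.

Lemma fold_max_lt (f : nat -> R) l :
  (forall x, List.In x l -> f x < 1) -> fold_right Rmax 0 (List.map f l) < 1.
Proof.
elim: l => [|y l IH] /= h; first lra.
apply: Rmax_lub_lt; first by apply: h; left.
by apply: IH => x hx; apply: h; right.
Qed.

Lemma fold_max_ge0 (f : nat -> R) l : 0 <= fold_right Rmax 0 (List.map f l).
Proof. elim: l => [|y l IH] /=; first lra. apply: Rle_trans IH _; exact: Rmax_r. Qed.

Lemma fold_max_mul (f : nat -> R) l c :
  0 <= c -> (forall x, List.In x l -> c * f x <= 1) -> c * fold_right Rmax 0 (List.map f l) <= 1.
Proof.
move=> c0; elim: l => [|y l IH] /= h; first lra.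
apply: (Rmax_case (f y) _ (fun z => c * z <= 1)).
  by apply: h; left.
by apply: IH => x hx; apply: h; right.
Qed.

Lemma in_seq0 q N : lt q N -> List.In q (List.seq 0 N).
Proof. by move=> h; apply/in_seq; lia. Qed.

Definition Hyps N theta lam1 (M : nat -> R) : Prop :=
  le 1 N /\
  (forall q, lt q N -> 0 <= theta q < 1) /\
  (forall p q, lt p N -> lt q N -> p <> q -> theta p <> theta q) /\
  is_smallest_eigenvalue N (Gram N theta) lam1 /\
  (forall p, lt p N -> is_max_circle (fun z => Cmod (Tp N theta p z) ^ 2) (M p)).

Definition Concl N theta lam1 (M : nat -> R) : Prop :=
  0 <= lam1 /\
  (forall p, lt p N -> lam1 * M p <= 1) /\
  (forall p, lt p N -> 1 <= M p) /\
  (forall m, (forall p, lt p N -> M p <= m) -> 1 <= INR N ^ 3 * m * lam1) /\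
  (exists p0, lt p0 N /\ gap_prod N theta p0 <= INR N) /\
  (forall p0, lt p0 N -> 0 < gap_prod N theta p0) /\
  (forall p0, lt p0 N -> forall A, is_max_circle (fun z => Cmod (Pp N theta p0 z) ^ 2) A ->
       A <= gap_prod N theta p0 ^ 2 * M p0 /\ gap_prod N theta p0 ^ 2 <= A) /\
  (forall p0, lt p0 N -> forall A B, is_max_circle (fun z => Cmod (Pp N theta p0 z) ^ 2) A ->
       is_max_circle (fun z => Cmod (Pall N theta z) ^ 2) B -> B <= A + A + A + A /\ 0 < B).

Definition thmax N theta := fold_right Rmax 0 (List.map theta (List.seq 0 N)).
Definition tstar N theta := (thmax N theta + 1) / 2.

Lemma tstar_in N theta : (forall q, lt q N -> 0 <= theta q < 1) -> Rin01 (tstar N theta).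
Proof.
move=> h; have h1 : thmax N theta < 1.
  apply: fold_max_lt => x /in_seq hx; have [_ hx1] := h x ltac:(lia); exact: hx1.
have := fold_max_ge0 theta (List.seq 0 N); rewrite /Rin01 /tstar -/(thmax N theta) => h0.
split; lra.
Qed.

Lemma tstar_neq N theta q : (forall q, lt q N -> 0 <= theta q < 1) -> lt q N -> tstar N theta <> theta q.
Proof.
move=> h qN; have h1 : thmax N theta < 1.
  apply: fold_max_lt => x /in_seq hx; have [_ hx1] := h x ltac:(lia); exact: hx1.
have := fold_max_ge theta (in_seq0 qN); rewrite -/(thmax N theta) /tstar => h2.
lra.
Qed.

End Folds.

Section Assemble.
Local Open Scope R_scope.
Lemma assemble N theta lam1 M : Hyps N theta lam1 M -> Concl N theta lam1 M ->
  1 / (INR N ^ 3 * Rmax_list N M) <= lam1 /\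
  lam1 <= 1 / Rmax_list N M /\
  (exists p0, lt p0 N /\ gap_prod N theta p0 <= INR N) /\
  (forall p0, lt p0 N -> gap_prod N theta p0 <= INR N ->
   forall A B : R,
     is_max_circle (fun z => Cmod (Pp N theta p0 z) ^ 2) A ->
     is_max_circle (fun z => Cmod (Pall N theta z) ^ 2) B ->
     lam1 <= INR N ^ 2 / A /\ INR N ^ 2 / A <= 4 * INR N ^ 2 / B).
Proof.
  intros [hN _] HC.

  destruct HC as [l0 [lup [M1 [low [gex [g0 [hAf hBf]]]]]]].
  assert (Mge : forall p, lt p N -> M p <= Rmax_list N M).
  { intros p hp. apply fold_max_ge. apply in_seq. lia. }
  assert (Mx1 : 1 <= Rmax_list N M).
  { apply Rle_trans with (M 0%nat); [apply M1; lia | apply Mge; lia]. }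
  assert (lMx : lam1 * Rmax_list N M <= 1).
  { apply fold_max_mul; [exact l0 |]. intros x Hx. apply in_seq in Hx. apply lup. lia. }
  assert (N1 : 1 <= INR N).
  { change 1 with (INR 1). apply le_INR. exact hN. }
  assert (hlow := low (Rmax_list N M) Mge).
  set (Mx := Rmax_list N M) in *.
  split.
  { assert (pos : 0 < INR N ^ 3 * Mx).
    { apply Rmult_lt_0_compat; [apply pow_lt; lra | lra]. }
    apply (Rmult_le_reg_l (INR N ^ 3 * Mx)); [exact pos |].
    replace (INR N ^ 3 * Mx * (1 / (INR N ^ 3 * Mx))) with 1 by (field; lra).
    exact hlow. }
  split.
  { apply (Rmult_le_reg_r Mx); [lra |].
    replace (1 / Mx * Mx) with 1 by (field; lra). exact lMx. }
  split; [exact gex |].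
  intros p0 hp0 hg A B hA hB.
  destruct (hAf p0 hp0 A hA) as [A1 A2].
  destruct (hBf p0 hp0 A B hA hB) as [B1 B2].
  assert (gpos := g0 p0 hp0).
  set (g := gap_prod N theta p0) in *.
  assert (g2 : 0 < g ^ 2) by (apply pow_lt; lra).
  assert (Apos : 0 < A) by lra.
  assert (lamM := lup p0 hp0).
  assert (gN : g ^ 2 <= INR N ^ 2) by (apply pow_incr; lra).
  split.
  { apply (Rmult_le_reg_r A); [exact Apos |].
    replace (INR N ^ 2 / A * A) with (INR N ^ 2) by (field; lra).
    apply Rle_trans with (lam1 * (g ^ 2 * M p0)).
    { apply Rmult_le_compat_l; [exact l0 | exact A1]. }
    replace (lam1 * (g ^ 2 * M p0)) with (g ^ 2 * (lam1 * M p0)) by ring.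
    apply Rle_trans with (g ^ 2 * 1).
    { apply Rmult_le_compat_l; [lra | exact lamM]. }
    lra. }
  { assert (n2 : 0 <= INR N ^ 2) by apply pow2_ge_0.
    apply (Rmult_le_reg_r (A * B)); [apply Rmult_lt_0_compat; lra |].
    replace (INR N ^ 2 / A * (A * B)) with (INR N ^ 2 * B) by (field; lra).
    replace (4 * INR N ^ 2 / B * (A * B)) with (INR N ^ 2 * (4 * A)) by (field; lra).
    apply Rmult_le_compat_l; [exact n2 | lra]. }
Qed.
End Assemble.

End T.

Module Core.
Import all_boot all_order all_algebra.
Import spectral ring zify Rstruct complex.
Import Order.TTheory GRing.Theory Num.Theory.
Import T.
Set Implicit Arguments. Unset Strict Implicit. Unset Printing Implicit Defensive.
Local Open Scope ring_scope.

Section CS.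
Variable F : numClosedFieldType.

Lemma CS n (a b : 'I_n -> F) : (forall i, 0 <= a i) -> (forall i, 0 <= b i) ->
  (\sum_i a i * b i) ^+ 2 <= (\sum_i a i ^+ 2) * (\sum_i b i ^+ 2).
Proof.
move=> a0 b0.
have D0 : 0 <= \sum_i \sum_j (a i * b j - a j * b i) ^+ 2.
  apply: sumr_ge0 => i _; apply: sumr_ge0 => j _.
  by rewrite -realEsqr rpredB // ger0_real // mulr_ge0.
set SA := \sum_i a i ^+ 2; set SB := \sum_i b i ^+ 2; set S := \sum_i a i * b i.
have h1 : \sum_i \sum_j a i ^+2 * b j ^+ 2 = SA * SB.
  by rewrite mulr_suml; apply: eq_bigr => i _; rewrite mulr_sumr.
have h2 : \sum_i \sum_j a j ^+2 * b i ^+ 2 = SA * SB.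
  by rewrite exchange_big /= h1.
have h3 : \sum_i \sum_j (a i * b i) * (a j * b j) = S ^+ 2.
  by rewrite expr2 mulr_suml; apply: eq_bigr => i _; rewrite mulr_sumr.
have E : \sum_i \sum_j (a i * b j - a j * b i) ^+ 2 =
  \sum_i \sum_j a i ^+2 * b j ^+ 2 + \sum_i \sum_j a j ^+2 * b i ^+ 2
  - 2%:R * \sum_i \sum_j (a i * b i) * (a j * b j).
  rewrite mulr_sumr -big_split -sumrB; apply: eq_bigr => i _.
  rewrite mulr_sumr -big_split -sumrB; apply: eq_bigr => j _.
  rewrite /=; ring.
move: D0; rewrite E h1 h2 h3 => D0.
rewrite -subr_ge0 -(pmulr_rge0 _ (ltr0Sn F 1)).
have -> : 2%:R * (SA*SB - S^+2) = SA*SB + SA*SB - 2%:R * S^+2 by ring.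
exact: D0.
Qed.
End CS.

Section Ray.
Variable F : numClosedFieldType.
Local Open Scope sesquilinear_scope.

Lemma trC_mul m n p (A : 'M[F]_(m, n)) (B : 'M[F]_(n, p)) :
  (A *m B) ^t* = B ^t* *m A ^t*.
Proof. by rewrite trmx_mul map_mxM. Qed.

Lemma dotE n (Y : 'cV[F]_n) : (Y ^t* *m Y) 0 0 = \sum_i `|Y i 0| ^+ 2.
Proof.
rewrite mxE; apply: eq_bigr => i _; rewrite !mxE normCK mulrC.
by [].
Qed.

Lemma aux (y dd l : F) : l <= dd -> y * y^* * l <= y^* * dd * y.
Proof.
move=> h; rewrite [y^* * dd * y]mulrC mulrA [y * y^*]mulrC; apply: ler_wpM2l => //.
by rewrite mulrC -normCK exprn_ge0.
Qed.

Lemma rayleigh n (G : 'M[F]_n) (l : F) :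
  G ^t* = G ->
  (forall mu (X : 'cV[F]_n), X != 0 -> G *m X = mu *: X -> l <= mu) ->
  forall X : 'cV[F]_n, l * (X ^t* *m X) 0 0 <= (X ^t* *m G *m X) 0 0.
Proof.
move=> GH Hall X.
have Gn : G \is normalmx by apply/normalmxP; rewrite GH.
have GE := orthomx_spectralP Gn.
set P := spectralmx G in GE; set d := spectral_diag G in GE.
have PU : P \is unitarymx by exact: spectral_unitarymx.
have PP : P *m P ^t* = 1%:M by apply/unitarymxP.
have PtP : P ^t* *m P = 1%:M by apply: mulmx1C.
rewrite invmx_unitary // in GE.
have dge : forall i, l <= d 0 i.
  move=> i; apply: (Hall _ (P ^t* *m delta_mx i 0)).
    apply/eqP => /(congr1 (mulmx P)); rewrite mulmxA PP mul1mx mulmx0.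
    move/matrixP/(_ i 0); rewrite !mxE !eqxx /= => /eqP; by rewrite oner_eq0.
  rewrite GE -!mulmxA (mulmxA P) PP mul1mx.
  have -> : diag_mx d *m delta_mx i 0 = d 0 i *: delta_mx i (0 : 'I_1).
    apply/matrixP => k j; rewrite mul_diag_mx !mxE.
    by case: (eqVneq k i) => [->|_]; rewrite ?mulr0 ?mulr1 //.
  by rewrite scalemxAr.
set Y := P *m X.
have XX : (X ^t* *m X) = Y ^t* *m Y.
  by rewrite /Y trC_mul mulmxA -(mulmxA _ _ P) PtP mulmx1.
have XGX : X ^t* *m G *m X = Y ^t* *m diag_mx d *m Y.
  by rewrite GE /Y trC_mul !mulmxA.
rewrite XX XGX dotE mulr_sumr mxE.
apply: ler_sum => k _.
rewrite mul_mx_diag !mxE normCK mulrC.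
apply: aux; exact: dge.
Qed.
End Ray.

Section Lag.
Variable F : numClosedFieldType.
Local Open Scope sesquilinear_scope.
Variable N : nat.
Hypothesis N_gt0 : (0 < N)%N.
Variable Z : nat -> F.
Hypothesis Zn : forall q, (q < N)%N -> `|Z q| = 1.
Hypothesis Zd : forall p q, (p < N)%N -> (q < N)%N -> p != q -> Z p != Z q.

Definition rs p := [seq q <- iota 0 N | q != p].
Definition den p := \prod_(q <- rs p) (Z p - Z q).
Definition Lp p : {poly F} := (den p)^-1 *: \prod_(q <- rs p) ('X - (Z q)%:P).
Definition cf p j := (Lp p)`_j.

Lemma mem_rs p q : (q \in rs p) = (q < N)%N && (q != p).
Proof. by rewrite mem_filter mem_iota add0n andbC. Qed.

Lemma size_rs p : (p < N)%N -> size (rs p) = N.-1.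
Proof.
move=> pN; rewrite size_filter.
have := count_predC (pred1 p) (iota 0 N).
rewrite size_iota (count_uniq_mem _ (iota_uniq 0 N)) mem_iota add0n pN /= => e.
by rewrite -[in RHS]e add1n.
Qed.

Lemma den_neq0 p : (p < N)%N -> den p != 0.
Proof.
move=> pN; rewrite prodf_seq_neq0; apply/allP => q; rewrite mem_rs => /andP[qN qp] /=.
by rewrite subr_eq0 Zd // eq_sym.
Qed.

Lemma Lp_eval p w : (Lp p).[w] = (den p)^-1 * \prod_(q <- rs p) (w - Z q).
Proof.
rewrite /Lp hornerZ horner_prod; congr (_ * _); apply: eq_bigr => q _.
by rewrite hornerXsubC.
Qed.

Lemma Lp_Z p q : (p < N)%N -> (q < N)%N -> (Lp p).[Z q] = (p == q)%:R.
Proof.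
move=> pN qN; rewrite Lp_eval; case: (eqVneq p q) => [<-|pq].
  by rewrite mulVf // den_neq0.
rewrite (big_rem q) /= ?mem_rs ?qN 1?eq_sym ?pq // subrr mul0r mulr0.
by [].
Qed.

Lemma size_Lp p : (p < N)%N -> size (Lp p) = N.
Proof.
move=> pN; rewrite size_scale ?invr_eq0 ?den_neq0 // size_prod_XsubC size_rs //.
by rewrite prednK.
Qed.

Lemma Lp_lead p : (p < N)%N -> cf p N.-1 = (den p)^-1.
Proof.
move=> pN; rewrite /cf /Lp coefZ.
have sz : size (\prod_(q <- rs p) ('X - (Z q)%:P)) = N.
  by rewrite size_prod_XsubC size_rs // prednK.
by rewrite -[in X in _`_X]sz -lead_coefE (monicP (monic_prod_XsubC _ _ _)) mulr1.
Qed.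

Lemma Lp_horner p w : (p < N)%N -> (Lp p).[w] = \sum_(j < N) cf p j * w ^+ j.
Proof. by move=> pN; rewrite (horner_coef_wide _ (n:=N)) ?size_Lp. Qed.

Definition Vn : 'M[F]_N := \matrix_(j < N, q < N) Z q ^+ j.
Definition Cm : 'M[F]_N := \matrix_(p < N, j < N) cf p j.

Lemma CV : Cm *m Vn = 1%:M.
Proof.
apply/matrixP => p q; rewrite !mxE.
under eq_bigr => j _ do rewrite !mxE.
by rewrite -Lp_horner // Lp_Z.
Qed.

Lemma VC : Vn *m Cm = 1%:M.
Proof. exact: mulmx1C CV. Qed.

Lemma sum_lead : \sum_(p < N) Z p ^+ N.-1 * (den p)^-1 = 1.
Proof.
have iN : (N.-1 < N)%N by rewrite ltn_predL.
have := VC; move/matrixP/(_ (Ordinal iN) (Ordinal iN)); rewrite !mxE eqxx /= => h.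
transitivity (\sum_(j < N) Vn (Ordinal iN) j * Cm j (Ordinal iN)); last by rewrite h.
by apply: eq_bigr => p _; rewrite !mxE Lp_lead.
Qed.

Lemma gap_exists : exists2 p, (p < N)%N & \prod_(q <- rs p) `|Z p - Z q| <= N%:R.
Proof.
case: (boolP [exists p : 'I_N, `|den p| <= N%:R]).
  by move=> /existsP [p hp]; exists p => //; rewrite -normr_prod.
rewrite negb_exists => /forallP H.
have : 1 <= \sum_(p < N) `|den p|^-1.
  rewrite -{1}(normr1 F) -sum_lead; apply: le_trans (ler_norm_sum _ _ _) _.
  by apply: ler_sum => p _; rewrite normrM normrX Zn // expr1n mul1r normrV ?unitfE ?den_neq0.
have lt : \sum_(p < N) `|den p|^-1 < \sum_(p < N) (N%:R)^-1 :> F.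
  apply: ltr_sum.
    by apply/hasP; exists (Ordinal N_gt0); rewrite ?mem_index_enum.
  move=> p _; have := H p.
  rewrite -real_ltNge ?realn ?normr_real // => hp.
  by rewrite ltf_pV2 ?posrE ?ltr0n // ?normr_gt0 ?den_neq0 //.
rewrite sumr_const card_ord -[_ *+ N]mulr_natr mulVf ?pnatr_eq0 -?lt0n // in lt.
by move=> h; have := lt_le_trans lt h; rewrite ltxx.
Qed.

End Lag.


Lemma dvdn_aux N i j : (N %| i + (N - j))%N -> (i < N)%N -> (j < N)%N -> i = j.
Proof. move=> /dvdnP [k hk] iN jN. case: k hk => [|[|k]] hk; [lia|lia|nia]. Qed.

Section DFT.
Variable F : numClosedFieldType.
Variable N : nat.
Hypothesis N_gt0 : (0 < N)%N.
Variable om : F.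
Hypothesis om_norm : `|om| = 1.
Hypothesis omN : om ^+ N = 1.
Hypothesis om_prim : forall m, (0 < m)%N -> (m < N)%N -> om ^+ m != 1.

Lemma om_pow_mod m : om ^+ m = om ^+ (m %% N).
Proof. by rewrite {1}(divn_eq m N) exprD mulnC exprM omN expr1n mul1r. Qed.

Lemma sum_om m : \sum_(k < N) (om ^+ m) ^+ k = if (N %| m)%N then N%:R else 0.
Proof.
case: ifP => dvd.
  rewrite om_pow_mod; move: dvd; rewrite /dvdn => /eqP ->; rewrite expr0.
  by under eq_bigr do rewrite expr1n; rewrite sumr_const card_ord.
have u1 : om ^+ m != 1.
  rewrite om_pow_mod; apply: om_prim; last by rewrite ltn_pmod.
  by rewrite lt0n; move: dvd; rewrite /dvdn => ->.
have : (om ^+ m - 1) * \sum_(k < N) (om ^+ m) ^+ k = 0.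
  by rewrite -subrX1 -exprM mulnC exprM omN expr1n subrr.
by move/eqP; rewrite mulf_eq0 subr_eq0 (negbTE u1) /= => /eqP.
Qed.


Lemma coef_dft (P : {poly F}) j : (size P <= N)%N -> (j < N)%N ->
   N%:R * P`_j = \sum_(k < N) P.[om ^+ k] * (om ^+ (N - j)) ^+ k.
Proof.
move=> sP jN.
under eq_bigr => k _ do rewrite (horner_coef_wide _ sP) mulr_suml.
rewrite exchange_big /=.
have E : forall i : 'I_N, \sum_(k < N) P`_i * (om ^+ k) ^+ i * (om ^+ (N - j)) ^+ k
    = P`_i * (if (N %| i + (N - j))%N then N%:R else 0).
  move=> i; rewrite -sum_om mulr_sumr; apply: eq_bigr => k _.
  by rewrite -mulrA -!exprM -exprD mulnDl [(k * i)%N]mulnC.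
under eq_bigr => i _ do rewrite E.
rewrite (bigD1 (Ordinal jN)) //= (subnKC (ltnW jN)) dvdnn big1 ?addr0; first by rewrite mulrC.
move=> i /eqP ij.
have nd : ~~ (N %| i + (N - j))%N.
  apply/negP => /dvdn_aux; move=> /(_ (ltn_ord i) jN) h; by apply: ij; apply: val_inj.
by rewrite (negbTE nd) mulr0.
Qed.

Lemma coef_bound (P : {poly F}) j M : (size P <= N)%N -> (j < N)%N ->
  (forall w, `|w| = 1 -> `|P.[w]| ^+ 2 <= M) -> `|P`_j| ^+ 2 <= M.
Proof.
move=> sP jN HM.
pose a : 'I_N -> F := fun k => `|P.[om ^+ k]|.
have h1 : N%:R * `|P`_j| <= \sum_(k < N) a k * 1.
  rewrite -[N%:R]normr_nat -normrM coef_dft //.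
  apply: le_trans (ler_norm_sum _ _ _) _; apply: ler_sum => k _.
  by rewrite normrM !normrX om_norm !expr1n /a mulr1.
have a0 : forall k, 0 <= a k by move=> k; exact: normr_ge0.
have h2 := @CS F N a (fun _ => 1) a0 (fun _ => ler01).
have h3 : \sum_(k < N) a k ^+ 2 <= N%:R * M.
  have -> : N%:R * M = \sum_(k < N) M by rewrite sumr_const card_ord mulr_natl.
  by apply: ler_sum => k _; apply: HM; rewrite normrX om_norm expr1n.
have h6 : \sum_(k < N) (1 : F) ^+ 2 = N%:R.
  by under eq_bigr do rewrite expr1n; rewrite sumr_const card_ord.
have s0 : 0 <= \sum_(k < N) a k * 1 by apply: sumr_ge0 => k _; rewrite mulr1 normr_ge0.
have h5 : (N%:R * `|P`_j|) ^+ 2 <= (\sum_(k < N) a k * 1) ^+ 2.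
  by rewrite ler_pXn2r // nnegrE // mulr_ge0 // ler0n.
have h7 : (N%:R * `|P`_j|) ^+ 2 <= (N%:R * M) * N%:R.
  apply: le_trans h5 _; apply: le_trans h2 _; rewrite h6.
  by apply: ler_wpM2r => //; rewrite ler0n.
have Npos : (0 : F) < N%:R ^+ 2 by rewrite exprn_gt0 // ltr0n.
rewrite -(ler_pM2l Npos); apply: le_trans _ (le_trans h7 _).
  by rewrite exprMn.
by rewrite mulrC mulrA -expr2.
Qed.

End DFT.

Section Bounds.
Variable F : numClosedFieldType.
Local Open Scope sesquilinear_scope.
Variable N : nat.
Hypothesis N_gt0 : (0 < N)%N.
Variable Z : nat -> F.
Hypothesis Zn : forall q, (q < N)%N -> `|Z q| = 1.
Hypothesis Zd : forall p q, (p < N)%N -> (q < N)%N -> p != q -> Z p != Z q.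
Variable om : F.
Hypothesis om_norm : `|om| = 1.
Hypothesis omN : om ^+ N = 1.
Hypothesis om_prim : forall m, (0 < m)%N -> (m < N)%N -> om ^+ m != 1.
Variable s : F.
Hypothesis s_pos : 0 < s.
Hypothesis s2N : s ^+ 2 * N%:R = 1.
Local Notation L := (Lp N Z).
Local Notation c := (cf N Z).
Definition Vm : 'M[F]_N := s *: Vn N Z.
Definition Gm := Vm ^t* *m Vm.
Variable lam : F.
Hypothesis Hlam : exists2 X : 'cV[F]_N, X != 0 & Gm *m X = lam *: X.
Hypothesis Hall : forall mu (X : 'cV[F]_N), X != 0 -> Gm *m X = mu *: X -> lam <= mu.

Definition nrm n (X : 'cV[F]_n) := (X ^t* *m X) 0 0.

Lemma nrm_ge0 n (X : 'cV[F]_n) : 0 <= nrm X.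
Proof. by rewrite /nrm dotE; apply: sumr_ge0 => i _; exact: exprn_ge0. Qed.

Lemma nrm_gt0 n (X : 'cV[F]_n) : X != 0 -> 0 < nrm X.
Proof.
move=> X0; rewrite lt_def nrm_ge0 andbT; apply/eqP => h.
apply: (negP X0); apply/eqP/matrixP => i j; rewrite ord1 mxE.
move: h; rewrite /nrm dotE => h.
have /eqP : `|X i 0| ^+ 2 = 0.
  by apply: (psumr_eq0P _ h) => // k _; exact: exprn_ge0.
by rewrite expf_eq0 /= normr_eq0 => /eqP.
Qed.

Lemma GH : Gm ^t* = Gm.
Proof. by rewrite /Gm trC_mul trmxCK. Qed.

Lemma quad (X : 'cV[F]_N) : (X ^t* *m Gm *m X) 0 0 = nrm (Vm *m X).
Proof. by rewrite /nrm /Gm trC_mul !mulmxA. Qed.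

Lemma eig_nrm (X : 'cV[F]_N) mu : Gm *m X = mu *: X -> mu * nrm X = nrm (Vm *m X).
Proof. by move=> GX; rewrite -quad -mulmxA GX -scalemxAr mxE. Qed.

Lemma lam_ge0 : 0 <= lam.
Proof.
case: Hlam => X X0 GX.
have := nrm_ge0 (Vm *m X); rewrite -(eig_nrm GX) pmulr_lge0 //.
exact: nrm_gt0.
Qed.

Lemma CmV (X : 'cV[F]_N) : Cm N Z *m (Vm *m X) = s *: X.
Proof. by rewrite /Vm -scalemxAl -scalemxAr mulmxA CV // mul1mx. Qed.

Lemma entry (p : 'I_N) (X : 'cV[F]_N) : s * X p 0 = \sum_(j < N) c p j * (Vm *m X) j 0.
Proof.
have := CmV X; move/matrixP/(_ p 0); rewrite !mxE => <-.
by apply: eq_bigr => j _; rewrite mxE.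
Qed.

Lemma coefb p j m : (p < N)%N -> (j < N)%N ->
  (forall w, `|w| = 1 -> `|(L p).[w]| ^+ 2 <= m) -> `|c p j| ^+ 2 <= m.
Proof.
move=> pN jN Hm; apply: (coef_bound N_gt0 om_norm omN om_prim) => //.
by rewrite size_Lp.
Qed.

Lemma sumN (x : F) : \sum_(j < N) x = N%:R * x.
Proof. by rewrite sumr_const card_ord mulr_natl. Qed.

Lemma lower m : (forall p, (p < N)%N -> forall w, `|w| = 1 -> `|(L p).[w]| ^+ 2 <= m) ->
  1 <= N%:R ^+ 3 * m * lam.
Proof.
move=> Hm; case: Hlam => X X0 GX.
set W := Vm *m X.
have e : lam * nrm X = nrm W by exact: eig_nrm.
have hp : forall p : 'I_N, `|X p 0| ^+ 2 <= N%:R ^+ 2 * m * nrm W.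
  move=> p.
  have cb : forall j : 'I_N, `|c p j| ^+ 2 <= m.
    by move=> j; apply: coefb (ltn_ord p) (ltn_ord j) (Hm p (ltn_ord p)).
  have h1 : `|s * X p 0| <= \sum_(j < N) `|c p j| * `|W j 0|.
    rewrite entry; apply: le_trans (ler_norm_sum _ _ _) _; apply: ler_sum => j _.
    by rewrite normrM.
  pose a : 'I_N -> F := fun j => `|c p j|.
  pose b : 'I_N -> F := fun j => `|W j 0|.
  have a0 : forall j, 0 <= a j by move=> j; exact: normr_ge0.
  have b0 : forall j, 0 <= b j by move=> j; exact: normr_ge0.
  have h2 := @CS F N a b a0 b0.
  have h3 : \sum_(j < N) a j ^+ 2 <= N%:R * m.
    by rewrite -sumN; apply: ler_sum => j _; exact: cb.
  have h4 : `|s * X p 0| ^+ 2 <= N%:R * m * nrm W.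
    apply: (@le_trans _ _ ((\sum_(j < N) a j * b j) ^+ 2)).
      rewrite ler_pXn2r // nnegrE ?normr_ge0 //.
      by apply: sumr_ge0 => j _; rewrite mulr_ge0.
    apply: le_trans h2 _; rewrite /nrm dotE; apply: ler_wpM2r => //.
    by apply: sumr_ge0 => j _; exact: exprn_ge0.
  have := ler_wpM2l (ler0n F N) h4.
  rewrite normrM exprMn (ger0_norm (ltW s_pos)) mulrA [N%:R * _]mulrC s2N mul1r.
  by rewrite expr2 !mulrA.
have hs : nrm X <= N%:R ^+ 3 * m * nrm W.
  rewrite {1}/nrm dotE; apply: le_trans (ler_sum _ (fun p _ => hp p)) _.
  rewrite sumN.
  have -> : N%:R ^+ 3 * m * nrm W = N%:R * (N%:R ^+ 2 * m * nrm W) by ring.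
  by [].
move: hs; rewrite -e mulrA -{1}[nrm X]mul1r ler_pM2r //.
exact: nrm_gt0.
Qed.

Lemma upper p w : (p < N)%N -> `|w| = 1 -> lam * `|(L p).[w]| ^+ 2 <= 1.
Proof.
move=> pN w1.
pose P : 'I_N := Ordinal pN.
pose Wv : 'cV[F]_N := \col_j (c p j)^*.
have Vu : Vm \in unitmx.
  have : (s^-1 *: Cm N Z) *m Vm = 1%:M.
    rewrite /Vm -scalemxAl -scalemxAr CV // scalerA mulVf ?scale1r //.
    by rewrite gt_eqF.
  by case/mulmx1_unit.
pose X := invmx Vm *m Wv.
have VX : Vm *m X = Wv by rewrite /X mulKVmx.
pose S := \sum_(j < N) `|c p j| ^+ 2.
have S0 : 0 <= S by apply: sumr_ge0 => j _; exact: exprn_ge0.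
have nW : nrm Wv = S by rewrite /nrm dotE; apply: eq_bigr => j _; rewrite mxE norm_conjC.
have sX : s * X P 0 = S.
  by rewrite entry VX; apply: eq_bigr => j _; rewrite mxE normCK.
have ray := rayleigh GH Hall X.
rewrite quad VX nW in ray.
have hXp : `|X P 0| ^+ 2 <= nrm X.
  by rewrite /nrm dotE (bigD1 P) //= lerDl; apply: sumr_ge0 => i _; exact: exprn_ge0.
have XP : `|X P 0| ^+ 2 = N%:R * S ^+ 2.
  have h : s ^+ 2 * `|X P 0| ^+ 2 = S ^+ 2.
    by rewrite -(ger0_norm (ltW s_pos)) -exprMn -normrM sX ger0_norm.
  transitivity ((s ^+ 2 * N%:R) * `|X P 0| ^+ 2); first by rewrite s2N mul1r.
  by rewrite mulrAC h mulrC.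
have key : (lam * N%:R * S) * S <= 1 * S.
  rewrite mul1r; apply: le_trans ray.
  have -> : lam * N%:R * S * S = lam * (N%:R * S ^+ 2) by ring.
  by rewrite -XP; apply: ler_wpM2l; [exact: lam_ge0|exact: hXp].
have hL : `|(L p).[w]| ^+ 2 <= N%:R * S.
  rewrite Lp_horner //.
  pose a : 'I_N -> F := fun j => `|c p j|.
  have a0 : forall j, 0 <= a j by move=> j; exact: normr_ge0.
  have h2 := @CS F N a (fun _ => 1) a0 (fun _ => ler01).
  have h1 : `|\sum_(j < N) c p j * w ^+ j| <= \sum_(j < N) a j * 1.
    apply: le_trans (ler_norm_sum _ _ _) _; apply: ler_sum => j _.
    by rewrite normrM normrX w1 expr1n.
  apply: (@le_trans _ _ ((\sum_(j < N) a j * 1) ^+ 2)).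
    rewrite ler_pXn2r // nnegrE ?normr_ge0 //.
    by apply: sumr_ge0 => j _; rewrite mulr1.
  apply: le_trans h2 _.
  have -> : \sum_(j < N) (1 : F) ^+ 2 = N%:R.
    by rewrite (eq_bigr (fun _ => 1)) ?sumN ?mulr1 // => j _; rewrite expr1n.
  by rewrite mulrC.
apply: (@le_trans _ _ (lam * (N%:R * S))).
  by apply: ler_wpM2l; [exact: lam_ge0|exact: hL].
move: S0; rewrite le0r => /orP [/eqP S0 | Spos].
  by rewrite S0 mulr0 mulr0 ler01.
by rewrite mulrA; move: key; rewrite ler_pM2r.
Qed.

End Bounds.

Section Extra.
Variable F : numClosedFieldType.
Variable N : nat.
Variable Z : nat -> F.
Hypothesis Zd : forall p q, (p < N)%N -> (q < N)%N -> p != q -> Z p != Z q.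

Definition gp p := \prod_(q <- rs N p) `|Z p - Z q|.

Lemma gp_den p : gp p = `|den N Z p|.
Proof. by rewrite /gp /den normr_prod. Qed.

Lemma gp_gt0 p : (p < N)%N -> 0 < gp p.
Proof. by move=> pN; rewrite gp_den normr_gt0 den_neq0. Qed.

Lemma normT p w : (p < N)%N ->
  `|\prod_(q <- rs N p) ((w - Z q) * `|Z p - Z q|^-1)| = `|(Lp N Z p).[w]|.
Proof.
move=> pN; rewrite Lp_eval big_split /= prodfV !normrM !normfV -gp_den -/(gp p).
by rewrite (ger0_norm (ltW (gp_gt0 pN))) mulrC.
Qed.

Lemma normLZ p : (p < N)%N -> `|(Lp N Z p).[Z p]| = 1.
Proof. by move=> pN; rewrite Lp_Z // eqxx normr1. Qed.



Lemma normPp p w : (p < N)%N -> `|\prod_(q <- rs N p) (w - Z q)| = gp p * `|(Lp N Z p).[w]|.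
Proof.
move=> pN; rewrite Lp_eval normrM normrV ?unitfE ?den_neq0 // -gp_den mulrA mulfV ?mul1r //.
by rewrite gt_eqF // gp_gt0.
Qed.

Lemma Pall_split p w : (p < N)%N ->
  \prod_(q <- iota 0 N) (w - Z q) = (w - Z p) * \prod_(q <- rs N p) (w - Z q).
Proof.
move=> pN; rewrite (big_rem p) ?mem_iota //= rem_filter ?iota_uniq //.
Qed.

End Extra.
Definition phi (a : Defs.C) : R[i] := Complex a.1 a.2.
Definition psi (z : R[i]) : Defs.C := let: Complex a b := z in (a, b).

Lemma phi_psi z : phi (psi z) = z. Proof. by case: z. Qed.
Lemma psi_phi a : psi (phi a) = a. Proof. by case: a. Qed.
Lemma phi_inj : injective phi.
Proof. by move=> a b h; rewrite -(psi_phi a) h psi_phi. Qed.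

Lemma phi_add a b : phi (Cadd a b) = phi a + phi b.
Proof. by case: a => a1 a2; case: b => b1 b2. Qed.
Lemma phi_opp a : phi (Copp a) = - phi a.
Proof. by case: a. Qed.
Lemma phi_sub a b : phi (Csub a b) = phi a - phi b.
Proof. by rewrite /Csub phi_add phi_opp. Qed.
Lemma phi_mul a b : phi (Cmul a b) = phi a * phi b.
Proof. by case: a => a1 a2; case: b => b1 b2. Qed.
Lemma phi0 : phi Defs.C0 = 0. Proof. by []. Qed.
Lemma phi1 : phi Defs.C1 = 1. Proof. by []. Qed.
Lemma phi_RtoC r : phi (RtoC r) = (r%:C)%C. Proof. by []. Qed.

Lemma conjC_conjc (x : R[i]) : x^* = conjc x.
Proof.
case: (eqVneq x 0) => [->|x0]; first by rewrite conjC0 conjc0.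
by apply: (mulfI x0); rewrite -normCK sqr_normc.
Qed.

Lemma phi_conj a : phi (Cconj a) = (phi a)^*.
Proof. by rewrite conjC_conjc; case: a. Qed.

Lemma Cmod_phi a : ((Cmod a)%:C)%C = `|phi a|.
Proof. by case: a => a1 a2; rewrite normc_def /Cmod RsqrtE !RpowE. Qed.

Lemma seq_iota a n : List.seq a n = iota a n.
Proof. by elim: n a => //= n IH a; rewrite IH. Qed.

Lemma filter_eq (P : nat -> bool) l : List.filter P l = filter P l.
Proof. by elim: l => //= x l ->. Qed.

Lemma eqbE q p : Nat.eqb q p = (q == p).
Proof. by case: (Nat.eqb_spec q p) => [->|h]; [rewrite eqxx | apply/esym/eqP]. Qed.

Lemma phi_foldsum (f : nat -> Defs.C) l :
  phi (fold_right Cadd Defs.C0 (List.map f l)) = \sum_(i <- l) phi (f i).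
Proof.
elim: l => [|x l IH] /=; first by rewrite big_nil.
by rewrite big_cons phi_add IH.
Qed.

Lemma phi_foldprod (f : nat -> Defs.C) l :
  phi (fold_right Cmul Defs.C1 (List.map f l)) = \prod_(i <- l) phi (f i).
Proof.
elim: l => [|x l IH] /=; first by rewrite big_nil.
by rewrite big_cons phi_mul IH.
Qed.

Lemma Rfoldprod (f : nat -> R) l :
  fold_right Rmult 1%R (List.map f l) = \prod_(i <- l) f i.
Proof.
elim: l => [|x l IH] /=; first by rewrite big_nil.
by rewrite big_cons IH.
Qed.

Lemma phi_Csum N f : phi (Csum N f) = \sum_(i < N) phi (f i).
Proof.
rewrite /Csum phi_foldsum seq_iota (_ : iota 0 N = index_iota 0 N) ?big_mkord //.
by rewrite /index_iota subn0.
Qed.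

Lemma phi_Cprod N P f :
  phi (Cprod_filter N P f) = \prod_(i <- iota 0 N | P i) phi (f i).
Proof. by rewrite /Cprod_filter phi_foldprod seq_iota filter_eq big_filter. Qed.

Lemma gap_prodE N theta p :
  gap_prod N theta p = \prod_(q <- rs N p) Cmod (Csub (zq theta p) (zq theta q)).
Proof.
rewrite /gap_prod Rfoldprod seq_iota filter_eq /rs.
by apply: congr_big => //; congr filter; apply: funext => q; rewrite eqbE.
Qed.



Lemma phi_Cexpi_pow x n : phi (Cexpi (INR n * x)) = phi (Cexpi x) ^+ n.
Proof.
elim: n => [|n IH].
  by rewrite /= Rmult_0_l /Cexpi cos_0 sin_0 expr0.
rewrite S_INR Rmult_plus_distr_r Rmult_1_l Rplus_comm Cexpi_add phi_mul IH exprS.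
by [].
Qed.


Section Inst.
Variable N : nat.
Hypothesis hN : (0 < N)%N.
Variable theta : nat -> R.
Hypothesis hrange : forall q, (q < N)%N -> Rin01 (theta q).
Hypothesis hdist : forall p q, (p < N)%N -> (q < N)%N -> p <> q -> theta p <> theta q.

Definition Zt q := phi (zq theta q).
Definition sN : R[i] := ((1 / sqrt (INR N))%:C)%C.
Definition omg := phi (Cexpi (Rmult 2 PI / INR N)).

Lemma Zt_norm q : `|Zt q| = 1.
Proof. by rewrite /Zt -Cmod_phi /zq Cmod_Cexpi. Qed.

Lemma Zt_dist p q : (p < N)%N -> (q < N)%N -> p != q -> Zt p != Zt q.
Proof.
move=> pN qN /eqP pq; apply/negP => /eqP /phi_inj.
move=> /(Cexpi_inj (ang_range (hrange pN)) (ang_range (hrange qN))) /ang_inj h.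
exact: (hdist pN qN pq).
Qed.

Lemma omg_norm : `|omg| = 1.
Proof. by rewrite /omg -Cmod_phi Cmod_Cexpi. Qed.

Lemma omg_pow m : omg ^+ m = phi (Cexpi (Rmult (Rmult 2 PI) (INR m / INR N))).
Proof. by rewrite /omg -phi_Cexpi_pow om_ang. Qed.

Lemma omgN : omg ^+ N = 1.
Proof.
by rewrite omg_pow INR_div_self // Rmult_1_r /Cexpi cos_2PI sin_2PI.
Qed.

Lemma omg_prim m : (0 < m)%N -> (m < N)%N -> omg ^+ m != 1.
Proof.
move=> m0 mN; rewrite omg_pow; apply/negP => /eqP h.
have : Cexpi (Rmult (Rmult 2 PI) (INR m / INR N)) = Defs.C1 by apply: phi_inj; rewrite h.
case=> hc _.
have := om_lt1 m0 mN; rewrite hc => /Rlt_irrefl //.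
Qed.

Lemma sN_pos : 0 < sN.
Proof. by rewrite /sN -[0]/(((0:R)%:C)%C) ltcR; apply/RltP; apply: s_pos_R. Qed.

Lemma sN2 : sN ^+ 2 * N%:R = 1.
Proof.
rewrite /sN -(rmorph_nat (real_complex R)) -rmorphXn -rmorphM.
have := s2N_R hN; rewrite !RmultE INRE => h.
by rewrite expr2 h.
Qed.

Local Open Scope sesquilinear_scope.
Local Notation G := (Gm N Zt sN).
Definition io j : 'I_N := insubd (Ordinal hN) j.
Lemma io_val (k : 'I_N) : io k = k.
Proof. by rewrite /io valKd. Qed.
Lemma val_io j : (j < N)%N -> (io j : nat) = j.
Proof. by move=> jN; rewrite /io val_insubd jN. Qed.


Lemma Vdm_phi l j : phi (Vdm N theta l j) = sN * Zt j ^+ l.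
Proof. by rewrite /Vdm phi_mul phi_RtoC ang_eq phi_Cexpi_pow. Qed.

Lemma Gram_phi j k : (j < N)%N -> (k < N)%N ->
  phi (Gram N theta j k) = G (io j) (io k).
Proof.
move=> jN kN; rewrite /Gram phi_Csum /Gm mxE; apply: eq_bigr => l _.
by rewrite phi_mul phi_conj !Vdm_phi !mxE !val_io.
Qed.

Lemma Hlam_tr lam1 : is_eigenvalue N (Gram N theta) (RtoC lam1) ->
  exists2 X : 'cV[R[i]]_N, X != 0 & G *m X = ((lam1%:C)%C) *: X.
Proof.
case=> x [[i [iN xi0]] hx].
exists (\col_(k < N) phi (x k)).
  apply/eqP => /matrixP /(_ (Ordinal (introT ssrnat.ltP iN)) 0); rewrite !mxE => h.
  by apply: xi0; apply: phi_inj; rewrite h.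
apply/matrixP => j z; rewrite ord1 !mxE.
have := hx j (elimT ssrnat.ltP (ltn_ord j)); move/(congr1 phi).
rewrite phi_Csum phi_mul phi_RtoC => <-.
apply: eq_bigr => k _; rewrite phi_mul Gram_phi // !io_val; congr (_ * _); by rewrite mxE.
Qed.

Lemma Hall_tr (lam1 : R) :
  (forall mu : Defs.C, is_eigenvalue N (Gram N theta) mu -> snd mu = 0%R /\ Rle lam1 (fst mu)) ->
  forall mu (X : 'cV[R[i]]_N), X != 0 -> G *m X = mu *: X -> (lam1%:C)%C <= mu.
Proof.
move=> H mu X X0 GX.
have [i Xi] : exists i, X i 0 != 0.
  case: (pickP (fun i => X i 0 != 0)) => [i hi|h]; first by exists i.
  exfalso; apply: (negP X0); apply/eqP/matrixP => i j; rewrite ord1 mxE.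
  by have := h i => /negbFE /eqP.
have : is_eigenvalue N (Gram N theta) (psi mu).
  exists (fun k => psi (X (io k) 0)); split.
    exists i; split; first exact: (elimT ssrnat.ltP (ltn_ord i)).
    by rewrite io_val => h; apply: (negP Xi); rewrite -(phi_psi (X i 0)) h.
  move=> j /(introT ssrnat.ltP) jN; apply: phi_inj.
  rewrite phi_Csum phi_mul !phi_psi.
  have := GX; move/matrixP/(_ (io j) 0); rewrite !mxE => <-.
  by apply: eq_bigr => k _; rewrite phi_mul phi_psi Gram_phi // io_val.
case: mu GX => a b GX /H /= [-> hab].
by rewrite lecE /= eqxx /=; apply/RleP.
Qed.

End Inst.

Section Bridge.
Variable N : nat.
Variable theta : nat -> R.
Variable lam1 : R.
Variable M : nat -> R.
Hypothesis H : Hyps N theta lam1 M.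

Lemma b_hN : (0 < N)%N.
Proof. by case: H => h _; apply/ssrnat.ltP. Qed.
Lemma b_range0 q : lt q N -> Rle 0 (theta q) /\ Rlt (theta q) (IZR (Zpos xH)).
Proof. by case: H => _ [h _]; apply: h. Qed.
Lemma b_range q : (q < N)%N -> Rin01 (theta q).
Proof. by move=> qN; apply: b_range0; apply/ssrnat.ltP. Qed.
Lemma b_dist p q : (p < N)%N -> (q < N)%N -> p <> q -> theta p <> theta q.
Proof. by case: H => _ [_ [h _]] pN qN; apply: h; apply/ssrnat.ltP. Qed.
Lemma b_Zd p q : (p < N)%N -> (q < N)%N -> p != q -> Zt theta p != Zt theta q.
Proof. move=> pN qN pq; exact: (@Zt_dist N theta b_range b_dist p q pN qN pq). Qed.
Lemma b_lam : exists2 X : 'cV[R[i]]_N, X != 0 & Gm N (Zt theta) (sN N) *m X = ((lam1%:C)%C) *: X.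
Proof. case: H => _ [_ [_ [hl _]]]; case: hl => h _. exact: (@Hlam_tr N b_hN theta lam1 h). Qed.
Lemma b_all mu (X : 'cV[R[i]]_N) : X != 0 -> Gm N (Zt theta) (sN N) *m X = mu *: X -> (lam1%:C)%C <= mu.
Proof. case: H => _ [_ [_ [hl _]]]; case: hl => _ h. exact: (@Hall_tr N b_hN theta lam1 h). Qed.

Local Notation L p := (Lp N (Zt theta) p).

Lemma Cmod2C x : ((pow (Cmod x) 2)%:C)%C = `|phi x| ^+ 2.
Proof. by rewrite -Cmod_phi RpowE rmorphXn. Qed.

Lemma circ z : Cmod z = IZR (Zpos xH) -> `|phi z| = 1.
Proof. by move=> h; rewrite -Cmod_phi h. Qed.

Lemma circ' w : `|w| = 1 -> Cmod (psi w) = IZR (Zpos xH).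
Proof. by move=> h; apply: (@complexI R); rewrite Cmod_phi phi_psi h. Qed.

Lemma phi_Tp p z : (p < N)%N -> `|phi (Tp N theta p z)| = `|(L p).[phi z]|.
Proof.
move=> pN; rewrite /Tp phi_Cprod (eq_bigl (fun i => i != p)); last by move=> i; rewrite eqbE.
rewrite -big_filter -/(rs N p) -(normT b_Zd _ pN); congr `|_|.
apply: eq_bigr => q _; rewrite phi_mul phi_sub phi_RtoC RinvE fmorphV /Zt -[phi (zq theta p) - _]phi_sub -Cmod_phi.
by [].
Qed.

Lemma phi_Pp p z : phi (Pp N theta p z) = \prod_(q <- rs N p) (phi z - Zt theta q).
Proof.
rewrite /Pp phi_Cprod [LHS](eq_bigl (fun i => i != p)); last by move=> i; rewrite eqbE.
by rewrite -big_filter; apply: eq_bigr => q _; rewrite phi_sub.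
Qed.

Lemma phi_Pall z : phi (Pall N theta z) = \prod_(q <- iota 0 N) (phi z - Zt theta q).
Proof. by rewrite /Pall phi_Cprod; apply: eq_bigr => q _; rewrite phi_sub. Qed.

Lemma gapC p : ((gap_prod N theta p)%:C)%C = gp N (Zt theta) p.
Proof. by rewrite gap_prodE rmorph_prod; apply: eq_bigr => q _; rewrite /Zt -phi_sub -Cmod_phi. Qed.

Lemma Hmax p : (p < N)%N ->
  (forall w, `|w| = 1 -> `|(L p).[w]| ^+ 2 <= ((M p)%:C)%C) /\
  (exists w, `|w| = 1 /\ `|(L p).[w]| ^+ 2 = ((M p)%:C)%C).
Proof.
move=> pN; case: H => _ [_ [_ [_ hM]]].
have [[z0 [hz0 e0]] hle] := hM p (elimT ssrnat.ltP pN).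
split.
  move=> w w1; have := hle (psi w) (circ' w1); move/RleP.
  by rewrite -lecR Cmod2C (phi_Tp _ pN) phi_psi.
exists (phi z0); split; first exact: circ.
by rewrite -e0 Cmod2C (phi_Tp _ pN).
Qed.

Lemma realC1 : ((1 : R)%:C)%C = 1 :> R[i]. Proof. by []. Qed.

Lemma c_lam0 : Rle 0 lam1.
Proof.
have := lam_ge0 b_lam; rewrite ler0c => /RleP; exact.
Qed.

Lemma c_upper p : lt p N -> Rle (Rmult lam1 (M p)) 1.
Proof.
move=> /ssrnat.ltP pN; have [_ [w [w1 e]]] := Hmax pN.
have := upper b_hN b_Zd (sN_pos b_hN) (sN2 b_hN) b_lam b_all pN w1.
rewrite e -rmorphM -realC1 lecR => /RleP; exact.
Qed.

Lemma c_M1 p : lt p N -> Rle 1 (M p).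
Proof.
move=> /ssrnat.ltP pN; have [hle _] := Hmax pN.
have := hle _ (Zt_norm theta p); rewrite (normLZ b_Zd pN) expr1n -realC1 lecR => /RleP; exact.
Qed.

Lemma c_lower m : (forall p, lt p N -> Rle (M p) m) ->
  Rle 1 (Rmult (Rmult (pow (INR N) 3) m) lam1).
Proof.
move=> hm.
have hw : forall p, (p < N)%N -> forall w, `|w| = 1 -> `|(L p).[w]| ^+ 2 <= ((m%:C)%C).
  move=> p pN w w1; have [hle _] := Hmax pN; apply: le_trans (hle w w1) _.
  by rewrite lecR; apply/RleP; apply: hm; apply/ssrnat.ltP.
have := lower b_hN b_Zd (omg_norm N) (omgN b_hN) (omg_prim b_hN) (sN_pos b_hN) (sN2 b_hN) b_lam hw.
rewrite -(rmorph_nat (real_complex R)) -rmorphXn -!rmorphM -realC1 lecR => /RleP.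
by rewrite RpowE INRE.
Qed.

Lemma c_gap : exists p0, lt p0 N /\ Rle (gap_prod N theta p0) (INR N).
Proof.
have [p pN hp] := gap_exists b_hN (fun q _ => Zt_norm theta q) b_Zd.
exists p; split; first by apply/ssrnat.ltP.
move: hp; rewrite -/(gp N (Zt theta) p) -gapC -(rmorph_nat (real_complex R)) lecR => /RleP.
by rewrite INRE.
Qed.

Lemma c_gap0 p : lt p N -> Rlt 0 (gap_prod N theta p).
Proof.
move=> /ssrnat.ltP pN; have := gp_gt0 b_Zd pN; rewrite -gapC -[0]/(((0:R)%:C)%C) ltcR => /RltP; exact.
Qed.

Lemma c_A p0 A : lt p0 N -> is_max_circle (fun z => pow (Cmod (Pp N theta p0 z)) 2) A ->
  Rle A (Rmult (pow (gap_prod N theta p0) 2) (M p0)) /\ Rle (pow (gap_prod N theta p0) 2) A.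
Proof.
move=> /ssrnat.ltP pN [[zA [hzA eA]] hA]; split.
  rewrite -eA; apply/RleP; rewrite -lecR Cmod2C phi_Pp (normPp b_Zd _ pN).
  rewrite -[gp N (Zt theta) p0]gapC RpowE rmorphM rmorphXn exprMn.
  have [hle _] := Hmax pN.
  apply: ler_wpM2l; last exact: hle (circ hzA).
  by apply: exprn_ge0; have := gp_gt0 b_Zd pN; rewrite -gapC => h; exact: ltW h.
have := hA (zq theta p0) (Cmod_Cexpi _); move/RleP; rewrite -lecR Cmod2C phi_Pp.
rewrite normr_prod -/(gp N (Zt theta) p0) -gapC -rmorphXn lecR => /RleP.
by rewrite RpowE.
Qed.

Lemma c_B p0 A B : lt p0 N -> is_max_circle (fun z => pow (Cmod (Pp N theta p0 z)) 2) A ->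
  is_max_circle (fun z => pow (Cmod (Pall N theta z)) 2) B ->
  Rle B (Rplus (Rplus (Rplus A A) A) A) /\ Rlt 0 B.
Proof.
move=> /ssrnat.ltP pN [_ hA] [[zB [hzB eB]] hB]; split.
  rewrite -eB; apply/RleP; rewrite -lecR Cmod2C phi_Pall (Pall_split _ _ pN) normrM exprMn.
  have -> : (((Rplus (Rplus (Rplus A A) A) A)%:C)%C : R[i]) = 4%:R * (A%:C)%C.
    by rewrite !rmorphD /=; ring.
  have h1 : `|phi zB - Zt theta p0| ^+ 2 <= 4%:R.
    have h2 : `|phi zB - Zt theta p0| <= 2%:R.
      by apply: le_trans (ler_normB _ _) _; rewrite (circ hzB) Zt_norm.
    have -> : (4%:R : R[i]) = 2%:R ^+ 2 by rewrite expr2 -natrM.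
    by rewrite ler_pXn2r // nnegrE ?normr_ge0 ?ler0n.
  have h3 : `|\prod_(q <- rs N p0) (phi zB - Zt theta q)| ^+ 2 <= ((A%:C)%C).
    have := hA zB hzB; move/RleP; rewrite -lecR Cmod2C phi_Pp; exact.
  apply: ler_pM => //; [exact: exprn_ge0 | exact: exprn_ge0].
pose zs := zq (fun _ => tstar N theta) 0.
have hin : forall q, lt q N -> Rle 0 (theta q) /\ Rlt (theta q) (IZR (Zpos xH)) := b_range0.
apply: (@Rlt_le_trans _ (pow (Cmod (Pall N theta zs)) 2)); last exact: hB zs (Cmod_Cexpi _).
apply/RltP; rewrite -ltcR Cmod2C phi_Pall; apply: exprn_gt0.
rewrite normr_gt0 prodf_seq_neq0; apply/allP => q; rewrite mem_iota add0n => /andP[_ qN] /=.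
rewrite subr_eq0; apply/negP => /eqP /phi_inj.
move=> /(Cexpi_inj (ang_range (tstar_in hin)) (ang_range (b_range qN))) /ang_inj h.
by apply: (tstar_neq hin (elimT ssrnat.ltP qN)).
Qed.


End Bridge.

Lemma bridge N theta lam1 M : Hyps N theta lam1 M -> Concl N theta lam1 M.
Proof.
move=> H; split; first exact: (c_lam0 H).
split; first exact: (c_upper H).
split; first exact: (c_M1 H).
split; first exact: (c_lower H).
split; first exact: (c_gap H).
split; first exact: (c_gap0 H).
split; first by move=> p0 hp A hA; exact: (c_A H hp hA).
by move=> p0 hp A B hA hB; exact: (c_B H hp hA hB).
Qed.

End Core.

Theorem mainTheorem9 (N : nat) (theta : nat -> R)
  (hN : (1 <= N)%nat)
  (hrange : forall q, (q < N)%nat -> 0 <= theta q < 1)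
  (hdist : forall p q, (p < N)%nat -> (q < N)%nat -> p <> q -> theta p <> theta q)
  (lam1 : R) (hlam1 : is_smallest_eigenvalue N (Gram N theta) lam1)
  (M : nat -> R)
  (hM : forall p, (p < N)%nat -> is_max_circle (fun z => Cmod (Tp N theta p z) ^ 2) (M p)) :
  1 / (INR N ^ 3 * Rmax_list N M) <= lam1 /\
  lam1 <= 1 / Rmax_list N M /\
  (exists p0, (p0 < N)%nat /\ gap_prod N theta p0 <= INR N) /\
  (forall p0, (p0 < N)%nat -> gap_prod N theta p0 <= INR N ->
   forall A B : R,
     is_max_circle (fun z => Cmod (Pp N theta p0 z) ^ 2) A ->
     is_max_circle (fun z => Cmod (Pall N theta z) ^ 2) B ->
     lam1 <= INR N ^ 2 / A /\ INR N ^ 2 / A <= 4 * INR N ^ 2 / B).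
Proof.
  assert (H : T.Hyps N theta lam1 M) by exact (conj hN (conj hrange (conj hdist (conj hlam1 hM)))).
  exact (T.assemble H (Core.bridge H)).
Qed.
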